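(* In the setting of the context (with $g$ unimodal, symmetric about $0$ and logconcave), $C(\theta)\ge C(2d_0)$ for all $\theta\in[0,d_1]$.
   Context: Let $g$ be a probability density on $\mathbb{R}$, unimodal and symmetric about $0$ (i.e. $g(z)=g(-z)$ and $g$ nonincreasing on $[0,\infty)$), and logconcave ($\log g$ concave on its support), with cdf $G$ and quantile function $G^{-1}(t)=\inf\{x:G(x)\ge t\}$. Let $X$ have density $g(x-\theta)$, $\theta\ge0$, and $P_\theta$ the corresponding probability. Fix $\alpha\in(0,1)$, and set $d_0=G^{-1}(\tfrac1{1+\alpha})$, $d_1=G^{-1}(1-\tfrac\alpha2)$. The HPD credible interval (prior $1_{[0,\infty)}(\theta)$, credibility $1-\alpha$) is $[l(X),u(X)]$ with $l(x)=\{x-G^{-1}(\tfrac12+\tfrac{1-\alpha}2G(x))\}1_{(d_0,\infty)}(x)$, $u(x)=x-G^{-1}(\alpha G(x))$ for $x\le d_0$ and $u(x)=x+G^{-1}(\tfrac12+\tfrac{1-\alpha}2G(x))$ for $x>d_0$. The frequentist coverage is $C(\theta)=P_\theta(l(X)\le\theta\le u(X))$. *)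

(* Defs.v *)
From Stdlib Require Import Reals Lra ClassicalEpsilon.
Open Scope R_scope.

Definition improper_int (f : R -> R) (v : R) : Prop :=
  forall eps, 0 < eps -> exists M, forall a b, a <= -M -> M <= b ->
    exists pr : Riemann_integrable f a b, Rabs (RiemannInt pr - v) < eps.

Definition lower_int (f : R -> R) (x v : R) : Prop :=
  forall eps, 0 < eps -> exists M, forall a, a <= -M ->
    exists pr : Riemann_integrable f a x, Rabs (RiemannInt pr - v) < eps.

Definition is_lower_bound (E : R -> Prop) (m : R) : Prop := forall x, E x -> m <= x.
Definition is_glb (E : R -> Prop) (m : R) : Prop :=
  is_lower_bound E m /\ (forall b, is_lower_bound E b -> b <= m).

(* Quantile G^{-1}(t) = inf {x | G x >= t}; chosen by epsilon, so it is the
   infimum whenever that infimum is finite (always the case for 0 < t < 1). *)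
Definition quantile (G : R -> R) (t : R) : R :=
  epsilon (inhabits 0) (fun q => is_glb (fun x => t <= G x) q).

Definition dzero (G : R -> R) (alpha : R) : R := quantile G (1 / (1 + alpha)).
Definition dzero1 (G : R -> R) (alpha : R) : R := quantile G (1 - alpha / 2).

Definition hpd_l (G : R -> R) (alpha x : R) : R :=
  if Rle_dec x (dzero G alpha) then 0
  else x - quantile G (1/2 + (1 - alpha) / 2 * G x).

(* Indicator of l(x) <= theta <= u(x).  When x <= d0 and G x = 0,
   u(x) = x - G^{-1}(0) = +oo, so the upper constraint holds. *)
Definition cover_ind (G : R -> R) (alpha theta x : R) : R :=
  if Rle_dec (hpd_l G alpha x) theta then
    (if Rle_dec x (dzero G alpha) then
       (if Req_EM_T (G x) 0 then 1
        else if Rle_dec theta (x - quantile G (alpha * G x)) then 1 else 0)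
     else if Rle_dec theta (x + quantile G (1/2 + (1 - alpha) / 2 * G x))
          then 1 else 0)
  else 0.

(* Integrand of the coverage probability C(theta) = P_theta(l(X)<=theta<=u(X)),
   X having density g(x - theta). *)
Definition cov_integrand (g G : R -> R) (alpha theta : R) (x : R) : R :=
  cover_ind G alpha theta x * g (x - theta).

Definition is_density (g : R -> R) : Prop :=
  (forall z, 0 <= g z) /\ improper_int g 1.
Definition symmetric_unimodal (g : R -> R) : Prop :=
  (forall z, g z = g (- z)) /\ (forall x y, 0 <= x -> x <= y -> g y <= g x).
(* log g concave on its (convex) support. *)
Definition logconcave (g : R -> R) : Prop :=
  forall x y t, 0 < g x -> 0 < g y -> 0 <= t <= 1 ->
    0 < g (t * x + (1 - t) * y) /\
    t * ln (g x) + (1 - t) * ln (g y) <= ln (g (t * x + (1 - t) * y)).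

(* Main.v *)
Require Import Defs.
From Stdlib Require Import Reals.
Open Scope R_scope.

From Stdlib Require Import Lra Lia List ClassicalEpsilon Classical RList RiemannInt_SF RiemannInt FunctionalExtensionality.


Lemma pos_Rl_nth : forall l i, pos_Rl l i = nth i l 0.
Proof. induction l as [|x l IH]; intros [|i]; simpl; auto. Qed.

Lemma Int_SF_app : forall lf l x w, l <> nil -> length l = S (length lf) ->
  Int_SF (lf ++ x :: nil) (l ++ w :: nil) = Int_SF lf l + x * (w - last l 0).
Proof.
  induction lf as [|a lf IH]; intros l x w Hn Hl.
  - destruct l as [|y0 [|y1 l]]; simpl in *; try discriminate; try congruence. ring.
  - destruct l as [|y0 [|y1 l]]; simpl in Hl; try discriminate; try lia.
    simpl.
    change (y1 :: l ++ w :: nil) with ((y1 :: l) ++ w :: nil).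
    rewrite IH; [| discriminate | simpl; lia]. simpl. ring.
Qed.

Lemma Int_SF_rev : forall c lf l, length l = S (length lf) ->
  Int_SF (rev lf) (rev (map (fun t => c - t) l)) = Int_SF lf l.
Proof.
  induction lf as [|a lf IH]; intros l Hl.
  - destruct l as [|y [|z l]]; simpl in *; try discriminate; try lia. reflexivity.
  - destruct l as [|y [|z l]]; simpl in Hl; try discriminate; try lia.
    change (rev (a :: lf)) with (rev lf ++ a :: nil).
    change (rev (map (fun t => c - t) (y :: z :: l)))
      with (rev (map (fun t => c - t) (z :: l)) ++ (c - y) :: nil).
    rewrite Int_SF_app.
    + rewrite IH by (simpl; lia).
      assert (Hl2 : forall (L : list R) d, L <> nil -> last (rev L) d = hd d L).
      { intros L d HL. destruct L as [|u L]; [congruence|]. simpl. apply last_last. }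
      rewrite Hl2 by discriminate. simpl. ring.
    + intro H. apply (f_equal (@length R)) in H. rewrite length_rev in H. simpl in H. discriminate.
    + rewrite length_rev, length_map, length_rev. simpl in *. lia.
Qed.

Lemma pos_rev_map : forall (h : R -> R) l i, (i < length l)%nat ->
  pos_Rl (rev (map h l)) i = h (pos_Rl l (length l - S i)).
Proof.
  intros h l i Hi. rewrite !pos_Rl_nth. rewrite rev_nth by (rewrite length_map; lia).
  rewrite length_map. rewrite nth_indep with (d' := h 0) by (rewrite length_map; lia).
  apply map_nth.
Qed.

Lemma pos_rev : forall l i, (i < length l)%nat ->
  pos_Rl (rev l) i = pos_Rl l (length l - S i).
Proof.
  intros l i Hi. rewrite <- (map_id l) at 1. rewrite pos_rev_map by auto. reflexivity.
Qed.

Lemma Rmin_refl_c : forall a b c, Rmin (c - b) (c - a) = c - Rmax a b.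
Proof. intros; unfold Rmin, Rmax; repeat destruct Rle_dec; lra. Qed.
Lemma Rmax_refl_c : forall a b c, Rmax (c - b) (c - a) = c - Rmin a b.
Proof. intros; unfold Rmin, Rmax; repeat destruct Rle_dec; lra. Qed.

Lemma adapted_refl : forall (f:R->R) a b c l lf, adapted_couple f a b l lf ->
  adapted_couple (fun x => f (c - x)) (c-b) (c-a) (rev (map (fun t => c - t) l)) (rev lf).
Proof.
  intros f a b c l lf (Hord & H0 & H1 & Hlen & Hcst).
  assert (Hn : length (rev (map (fun t => c - t) l)) = length l)
    by (rewrite length_rev, length_map; auto).
  unfold adapted_couple. repeat split.
  - unfold ordered_Rlist. intros i Hi. rewrite Hn in Hi.
    rewrite !pos_rev_map by lia.
    assert (HH := Hord (length l - S (S i))%nat ltac:(lia)).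
    replace (S (length l - S (S i))) with (length l - S i)%nat in HH by lia. lra.
  - rewrite pos_rev_map by lia. rewrite Rmin_refl_c.
    replace (length l - 1)%nat with (pred (length l)) by lia. rewrite H1. auto.
  - rewrite Hn. rewrite pos_rev_map by lia. rewrite Rmax_refl_c.
    replace (length l - S (pred (length l)))%nat with 0%nat by lia. rewrite H0. auto.
  - rewrite Hn, length_rev. auto.
  - intros i Hi. rewrite Hn in Hi. intros x Hx. unfold open_interval in Hx.
    rewrite !pos_rev_map in Hx by lia.
    rewrite pos_rev by lia.
    replace (length lf - S i)%nat with (length l - S (S i))%nat by lia.
    apply Hcst. lia. unfold open_interval.
    replace (S (length l - S (S i))) with (length l - S i)%nat by lia. lra.
Qed.

Definition refl_isSF (c a b : R) (phi : StepFun a b) :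
  IsStepFun (fun x => phi (c - x)) (c - b) (c - a) :=
  existT _ (rev (map (fun t => c - t) (subdivision phi)))
    (existT _ (rev (subdivision_val phi)) (@adapted_refl phi a b c _ _ (StepFun_P1 phi))).

Definition reflSF (c a b : R) (phi : StepFun a b) : StepFun (c - b) (c - a) :=
  mkStepFun (refl_isSF c a b phi).

Lemma reflSF_int : forall c a b (phi : StepFun a b),
  RiemannInt_SF (reflSF c a b phi) = RiemannInt_SF phi.
Proof.
  intros c a b phi. unfold RiemannInt_SF. unfold subdivision_val, subdivision. simpl. fold (subdivision_val phi). fold (subdivision phi).
  assert (HL := StepFun_P1 phi). destruct HL as (_ & _ & _ & Hlen & _).
  rewrite Int_SF_rev by auto.
  destruct (Rle_dec (c - b) (c - a)); destruct (Rle_dec a b); auto; lra.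
Qed.

Definition refl_RI (f : R -> R) (c a b : R) (pr : Riemann_integrable f a b) :
  Riemann_integrable (fun x => f (c - x)) (c - b) (c - a).
Proof.
  intro eps.
  exists (reflSF c a b (projT1 (pr eps))).
  exists (reflSF c a b (proj1_sig (projT2 (pr eps)))).
  destruct (proj2_sig (projT2 (pr eps))) as [H1 H2]. split.
  - intros t Ht. simpl. apply H1. rewrite Rmin_refl_c, Rmax_refl_c in Ht.
    revert Ht; generalize (Rmin a b) (Rmax a b); intros; lra.
  - rewrite reflSF_int. exact H2.
Defined.

Lemma refl_RI_val : forall f c a b (pr : Riemann_integrable f a b)
  (pr' : Riemann_integrable (fun x => f (c - x)) (c - b) (c - a)),
  RiemannInt pr' = RiemannInt pr.
Proof.
  intros f c a b pr pr'.
  rewrite (RiemannInt_P5 pr' (refl_RI f c a b pr)).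
  unfold RiemannInt.
  destruct (RiemannInt_exists (refl_RI f c a b pr) RinvN RinvN_cv) as [l1 H1].
  destruct (RiemannInt_exists pr RinvN RinvN_cv) as [l2 H2].
  apply UL_sequence with (1 := H1).
  intros eps Heps. destruct (H2 eps Heps) as [N HN]. exists N. intros n Hn.
  unfold phi_sequence. simpl. rewrite reflSF_int. apply HN; auto.
Qed.


Lemma RI_cast : forall f g a b a' b', (forall x, f x = g x) -> a = a' -> b = b' ->
  Riemann_integrable f a b -> Riemann_integrable g a' b'.
Proof.
  intros f g a b a' b' Hfg Ha Hb pr. subst.
  replace g with f by (apply functional_extensionality; auto). exact pr.
Qed.

Lemma RI_cast_val : forall f g a b a' b' (pr : Riemann_integrable f a b)
  (pr' : Riemann_integrable g a' b'), (forall x, f x = g x) -> a = a' -> b = b' ->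
  RiemannInt pr = RiemannInt pr'.
Proof.
  intros f g a b a' b' pr pr' Hfg Ha Hb. subst.
  assert (f = g) by (apply functional_extensionality; auto). subst.
  apply RiemannInt_P5.
Qed.

Lemma shift_RI : forall f a b c, Riemann_integrable f (a - c) (b - c) ->
  Riemann_integrable (fun x => f (x - c)) a b.
Proof.
  intros f a b c pr.
  pose proof (refl_RI (fun x => f (0 - x)) c _ _ (refl_RI f 0 _ _ pr)) as pr2.
  eapply RI_cast; [| | | exact pr2]; simpl; intros; try ring.
  f_equal; ring.
Qed.

Lemma shift_val : forall f a b c (pr : Riemann_integrable f (a - c) (b - c))
  (pr' : Riemann_integrable (fun x => f (x - c)) a b),
  RiemannInt pr' = RiemannInt pr.
Proof.
  intros f a b c pr pr'.
  pose proof (refl_RI f 0 _ _ pr) as pr1.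
  pose proof (refl_RI (fun x => f (0 - x)) c _ _ pr1) as pr2.
  rewrite <- (refl_RI_val _ _ _ _ pr pr1).
  rewrite <- (refl_RI_val _ _ _ _ pr1 pr2).
  symmetry. apply RI_cast_val; intros; try ring. f_equal; ring.
Qed.

Definition spike (p v : R) : R -> R := fun x => if Req_EM_T x p then v else 0.

Lemma spike_adapted : forall a b p v, a <= p <= b ->
  adapted_couple (spike p v) a b (a :: p :: b :: nil) (0 :: 0 :: nil).
Proof.
  intros a b p v Hp. unfold adapted_couple. repeat split.
  - intros i Hi. simpl in Hi. destruct i as [|[|i]]; simpl; lra || lia.
  - simpl. rewrite Rmin_left; lra.
  - simpl. rewrite Rmax_right; lra.
  - intros i Hi. simpl in Hi. intros x Hx. unfold open_interval in Hx.
    unfold spike. destruct (Req_EM_T x p).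
    + destruct i as [|[|i]]; simpl in Hx; lra || lia.
    + destruct i as [|[|i]]; simpl; reflexivity || lia.
Qed.

Definition spikeSF (a b p v : R) (H : a <= p <= b) : StepFun a b :=
  mkStepFun (existT _ (a :: p :: b :: nil) (existT _ (0 :: 0 :: nil) (@spike_adapted a b p v H))).

Lemma SF_RI : forall a b (phi : StepFun a b), Riemann_integrable phi a b.
Proof.
  intros a b phi eps. exists phi. exists (mkStepFun (StepFun_P4 a b 0)). split.
  - intros t _. simpl. unfold fct_cte. rewrite Rminus_diag, Rabs_R0. lra.
  - rewrite StepFun_P18. rewrite Rmult_0_l, Rabs_R0. apply cond_pos.
Qed.

Lemma pt_mod : forall f k a b p, Riemann_integrable f a b ->
  (forall x, Rmin a b <= x <= Rmax a b -> x <> p -> k x = f x) -> Riemann_integrable k a b.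
Proof.
  assert (Hle : forall f k a b p, a <= b -> Riemann_integrable f a b ->
    (forall x, Rmin a b <= x <= Rmax a b -> x <> p -> k x = f x) -> Riemann_integrable k a b).
  { intros f k a b p Hab pr Hk.
    destruct (Rle_dec a p) as [H1|H1]; [destruct (Rle_dec p b) as [H2|H2]|].
    - pose proof (SF_RI _ _ (spikeSF a b p (k p - f p) (conj H1 H2))) as ps.
      pose proof (@RiemannInt_P10 _ _ _ _ 1 pr ps) as pr2.
      apply (Riemann_integrable_ext (f := fun x => f x + 1 * spikeSF a b p (k p - f p) (conj H1 H2) x)).
      + intros x Hx. simpl. unfold spike. destruct (Req_EM_T x p).
        * subst. ring.
        * rewrite Hk by auto. ring.
      + exact pr2.
    - apply (Riemann_integrable_ext (f := f)); auto.
      intros x Hx. rewrite Hk; auto. rewrite Rmin_left, Rmax_right in Hx by lra. intro; subst; lra.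
    - apply (Riemann_integrable_ext (f := f)); auto.
      intros x Hx. rewrite Hk; auto. rewrite Rmin_left, Rmax_right in Hx by lra. intro; subst; lra. }
  intros f k a b p pr Hk. destruct (Rle_dec a b).
  - eapply Hle; eauto.
  - apply RiemannInt_P1. eapply Hle; [lra| apply RiemannInt_P1; exact pr| ].
    intros x Hx. apply Hk. rewrite Rmin_comm, Rmax_comm. exact Hx.
Qed.

Lemma conv_RI_le : forall f k (J : R -> Prop) a b, a <= b -> Riemann_integrable f a b ->
  (forall x y z, J x -> J z -> x <= y <= z -> J y) ->
  (forall x, J x -> k x = f x) -> (forall x, ~ J x -> k x = 0) ->
  Riemann_integrable k a b.
Proof.
  intros f k J a b Hab pr HJ Hk1 Hk0.
  destruct (excluded_middle_informative (exists x, a <= x <= b /\ J x)) as [Hex|Hne].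
  2:{ apply (Riemann_integrable_ext (f := fct_cte 0)); [|apply RiemannInt_P14].
      intros x Hx. unfold fct_cte. rewrite Hk0; auto. intro HJx. apply Hne.
      rewrite Rmin_left, Rmax_right in Hx by lra. eauto. }
  set (E := fun x => a <= x <= b /\ J x).
  destruct (completeness E) as [M HM].
  { exists b. intros x Hx. apply Hx. }
  { destruct Hex as [x Hx]. exists x. exact Hx. }
  destruct (completeness (fun x => E (- x))) as [m' Hm'].
  { exists (- a). intros x Hx. destruct Hx as [Hx _]. lra. }
  { destruct Hex as [x Hx]. exists (- x). unfold E. rewrite Ropp_involutive. exact Hx. }
  set (m := - m').
  destruct (constructive_indefinite_description _ Hex) as [x0 Hx0].
  assert (HmE : forall x, E x -> m <= x).
  { intros x Hx. unfold m. assert (- x <= m') by (apply Hm'; rewrite Ropp_involutive; auto). lra. }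
  assert (HME : forall x, E x -> x <= M) by (intros x Hx; apply HM; auto).
  assert (Hm0 : m <= x0) by (apply HmE; exact Hx0).
  assert (HM0 : x0 <= M) by (apply HME; exact Hx0).
  assert (Ham : a <= m).
  { unfold m. assert (m' <= - a). { apply Hm'. intros x Hx. destruct Hx. lra. } lra. }
  assert (HMb : M <= b) by (apply HM; intros x Hx; destruct Hx; lra).
  assert (Hin : forall x, m < x < M -> J x).
  { intros x Hx.
    assert (H1 : exists y, E y /\ y < x).
    { apply NNPP. intro Hn. assert (m' <= - x).
      { apply Hm'. intros y Hy. apply Rnot_lt_le. intro Hlt.
        apply Hn. exists (- y). split; auto. lra. }
      unfold m in Hx. lra. }
    assert (H2 : exists y, E y /\ x < y).
    { apply NNPP. intro Hn. assert (M <= x).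
      { apply HM. intros y Hy. apply Rnot_lt_le. intro Hlt. apply Hn. eauto. }
      lra. }
    destruct H1 as [y1 [[_ Hy1] Hl1]]. destruct H2 as [y2 [[_ Hy2] Hl2]].
    apply (HJ y1 x y2); auto; lra. }
  assert (Hout1 : forall x, a <= x < m -> ~ J x).
  { intros x Hx HJx. assert (m <= x) by (apply HmE; split; auto; lra). lra. }
  assert (Hout2 : forall x, M < x <= b -> ~ J x).
  { intros x Hx HJx. assert (x <= M) by (apply HME; split; auto; lra). lra. }
  apply RiemannInt_P24 with m; [|apply RiemannInt_P24 with M].
  - apply (pt_mod (fct_cte 0) k a m m); [apply RiemannInt_P14|].
    intros x Hx Hxm. rewrite Rmin_left, Rmax_right in Hx by lra.
    unfold fct_cte. apply Hk0, Hout1. lra.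
  - assert (prf : Riemann_integrable f m M).
    { apply RiemannInt_P22 with b; [|lra]. apply RiemannInt_P23 with a; [exact pr|lra]. }
    set (k1 := fun x => if Req_EM_T x m then k x else f x).
    apply (pt_mod k1 k m M M).
    + apply (pt_mod f k1 m M m); [exact prf|].
      intros x _ Hx. unfold k1. destruct (Req_EM_T x m); [congruence|auto].
    + intros x Hx HxM. rewrite Rmin_left, Rmax_right in Hx by lra.
      unfold k1. destruct (Req_EM_T x m); auto. apply Hk1, Hin. lra.
  - apply (pt_mod (fct_cte 0) k M b M); [apply RiemannInt_P14|].
    intros x Hx HxM. rewrite Rmin_left, Rmax_right in Hx by lra.
    unfold fct_cte. apply Hk0, Hout2. lra.
Qed.

Lemma conv_RI : forall f k (J : R -> Prop) a b, Riemann_integrable f a b ->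
  (forall x y z, J x -> J z -> x <= y <= z -> J y) ->
  (forall x, J x -> k x = f x) -> (forall x, ~ J x -> k x = 0) ->
  Riemann_integrable k a b.
Proof.
  intros f k J a b pr HJ H1 H0. destruct (Rle_dec a b).
  - eapply conv_RI_le; eauto.
  - apply RiemannInt_P1. eapply conv_RI_le; eauto; [lra|]. apply RiemannInt_P1; auto.
Qed.


Lemma int_nonneg : forall h a b (pr : Riemann_integrable h a b), a <= b ->
  (forall x, a < x < b -> 0 <= h x) -> 0 <= RiemannInt pr.
Proof.
  intros h a b pr Hab H.
  rewrite <- (Rmult_0_l (b - a)). rewrite <- (RiemannInt_P15 (RiemannInt_P14 a b 0)).
  apply RiemannInt_P19; auto.
Qed.

Lemma int_le_const : forall h a b (pr : Riemann_integrable h a b) c, a <= b ->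
  (forall x, a < x < b -> h x <= c) -> RiemannInt pr <= c * (b - a).
Proof.
  intros h a b pr c Hab H.
  rewrite <- (RiemannInt_P15 (RiemannInt_P14 a b c)).
  apply RiemannInt_P19; auto.
Qed.

Lemma int_mono_dom : forall h a b a0 b0 (pr : Riemann_integrable h a b)
  (pr0 : Riemann_integrable h a0 b0), a <= a0 -> a0 <= b0 -> b0 <= b ->
  (forall x, a < x < b -> 0 <= h x) -> RiemannInt pr0 <= RiemannInt pr.
Proof.
  intros h a b a0 b0 pr pr0 H1 H2 H3 Hpos.
  assert (p1 : Riemann_integrable h a a0) by (apply RiemannInt_P22 with b; auto; lra).
  assert (p2 : Riemann_integrable h a0 b) by (apply RiemannInt_P23 with a; auto; lra).
  assert (p3 : Riemann_integrable h b0 b) by (apply RiemannInt_P23 with a0; auto; lra).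
  rewrite <- (RiemannInt_P26 p1 p2 pr). rewrite <- (RiemannInt_P26 pr0 p3 p2).
  assert (0 <= RiemannInt p1) by (apply int_nonneg; auto; intros; apply Hpos; lra).
  assert (0 <= RiemannInt p3) by (apply int_nonneg; auto; intros; apply Hpos; lra).
  lra.
Qed.

Lemma improper_exists : forall h B, (forall a b, Riemann_integrable h a b) ->
  (forall x, 0 <= h x) ->
  (forall a b (pr : Riemann_integrable h a b), a <= b -> RiemannInt pr <= B) ->
  exists v, improper_int h v.
Proof.
  intros h B Hri Hpos HB.
  set (E := fun v => exists a b (pr : Riemann_integrable h a b), a <= b /\ v = RiemannInt pr).
  destruct (completeness E) as [V HV].
  { exists B. intros v [a [b [pr [Hab ->]]]]. auto. }
  { exists (RiemannInt (Hri 0 0)). exists 0, 0, (Hri 0 0). split; auto; lra. }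
  exists V. intros eps Heps.
  assert (Hex : exists a0 b0 (pr0 : Riemann_integrable h a0 b0), a0 <= b0 /\ V - eps < RiemannInt pr0).
  { apply NNPP. intro Hn. assert (V <= V - eps); [|lra].
    apply HV. intros v [a [b [pr [Hab ->]]]]. apply Rnot_lt_le. intro Hlt. apply Hn.
    exists a, b, pr. split; auto. }
  destruct Hex as [a0 [b0 [pr0 [Hab0 Hv0]]]].
  exists (Rabs a0 + Rabs b0 + 1). intros a b Ha Hb.
  exists (Hri a b).
  assert (a <= a0) by (pose proof (Rle_abs (- a0)); rewrite Rabs_Ropp in *; pose proof (Rabs_pos b0); lra).
  assert (b0 <= b) by (pose proof (Rle_abs b0); pose proof (Rabs_pos a0); lra).
  assert (RiemannInt (Hri a b) <= V) by (apply HV; exists a, b, (Hri a b); split; auto; lra).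
  assert (RiemannInt pr0 <= RiemannInt (Hri a b)) by (apply int_mono_dom; auto; lra).
  apply Rabs_def1; lra.
Qed.


Record hyps (g G : R -> R) : Prop := {
  hpos : forall z, 0 <= g z;
  himp : improper_int g 1;
  hsym : forall z, g z = g (- z);
  hmono : forall x y, 0 <= x -> x <= y -> g y <= g x;
  hlc : logconcave g;
  hG : forall x, lower_int g x (G x) }.
Arguments hpos {g G}. Arguments himp {g G}. Arguments hsym {g G}. Arguments hmono {g G}.
Arguments hlc {g G}. Arguments hG {g G}.

Lemma RI_restrict : forall f A B a b, Riemann_integrable f A B -> A <= a <= B -> A <= b <= B ->
  Riemann_integrable f a b.
Proof.
  intros f A B a b pr Ha Hb. destruct (Rle_dec a b).
  - apply RiemannInt_P22 with B; [|lra]. apply RiemannInt_P23 with A; [exact pr|lra].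
  - apply RiemannInt_P1. apply RiemannInt_P22 with B; [|lra]. apply RiemannInt_P23 with A; [exact pr|lra].
Qed.


Lemma g_int : forall {g G : R -> R}, hyps g G -> forall a b, Riemann_integrable g a b.
Proof.
  intros g G H a b.
  destruct (constructive_indefinite_description _ (himp H 1 Rlt_0_1)) as [M HM].
  destruct (constructive_indefinite_description _
     (HM (Rmin (Rmin a b) (- M)) (Rmax (Rmax a b) M) (Rmin_r _ _) (Rmax_r _ _))) as [pr _].
  apply (RI_restrict _ _ _ _ _ pr); split;
   repeat first [apply Rmin_glb_le | apply Rmax_le_compat | idtac];
   unfold Rmin, Rmax; repeat destruct Rle_dec; lra.
Qed.

Lemma eq_by_eps : forall A B, (forall eps, 0 < eps -> Rabs (A - B) < eps) -> A = B.
Proof.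
  intros A B H. destruct (Req_dec A B); auto.
  specialize (H (Rabs (A - B)) ltac:(apply Rabs_pos_lt; lra)). lra.
Qed.

Lemma G_diff_le : forall {g G : R -> R}, hyps g G -> forall x y (pr : Riemann_integrable g x y), x <= y ->
  RiemannInt pr = G y - G x.
Proof.
  intros g G H x y pr Hxy. apply eq_by_eps. intros eps Heps.
  destruct (hG H x (eps/2) ltac:(lra)) as [M1 HM1].
  destruct (hG H y (eps/2) ltac:(lra)) as [M2 HM2].
  set (a := Rmin (Rmin (- M1) (- M2)) x).
  assert (Ha1 : a <= - M1) by (unfold a, Rmin; repeat destruct Rle_dec; lra).
  assert (Ha2 : a <= - M2) by (unfold a, Rmin; repeat destruct Rle_dec; lra).
  assert (Hax : a <= x) by (unfold a, Rmin; repeat destruct Rle_dec; lra).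
  destruct (HM1 a Ha1) as [p1 Hp1]. destruct (HM2 a Ha2) as [p2 Hp2].
  rewrite <- (RiemannInt_P26 p1 pr p2) in Hp2.
  apply Rabs_def2 in Hp1. apply Rabs_def2 in Hp2. apply Rabs_def1; lra.
Qed.

Lemma G_diff : forall {g G : R -> R}, hyps g G -> forall x y (pr : Riemann_integrable g x y),
  RiemannInt pr = G y - G x.
Proof.
  intros g G H x y pr. destruct (Rle_dec x y).
  - eapply G_diff_le; eauto.
  - rewrite (RiemannInt_P8 pr (RiemannInt_P1 pr)). rewrite (G_diff_le H); [ring|lra].
Qed.

Lemma G_mono : forall {g G : R -> R}, hyps g G -> forall x y, x <= y -> G x <= G y.
Proof.
  intros g G H x y Hxy. pose proof (G_diff H _ _ (g_int H x y)).
  assert (0 <= RiemannInt (g_int H x y)) by (apply int_nonneg; auto; intros; apply (hpos H)).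
  lra.
Qed.

Lemma g_le0 : forall {g G : R -> R}, hyps g G -> forall z, g z <= g 0.
Proof.
  intros g G H z. destruct (Rle_dec 0 z).
  - apply (hmono H); lra.
  - rewrite (hsym H z). apply (hmono H); lra.
Qed.

Lemma G_lip : forall {g G : R -> R}, hyps g G -> forall x y, x <= y -> G y - G x <= g 0 * (y - x).
Proof.
  intros g G H x y Hxy. rewrite <- (G_diff H _ _ (g_int H x y)).
  apply int_le_const; auto. intros; apply (g_le0 H).
Qed.

Lemma G_nonneg : forall {g G : R -> R}, hyps g G -> forall x, 0 <= G x.
Proof.
  intros g G H x. apply Rnot_lt_le. intro Hlt.
  destruct (hG H x (- G x) ltac:(lra)) as [M HM].
  set (a := Rmin (- M) x).
  destruct (HM a ltac:(unfold a; apply Rmin_l)) as [pr Hpr].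
  assert (0 <= RiemannInt pr) by (apply int_nonneg; [unfold a; apply Rmin_r|]; intros; apply (hpos H)).
  apply Rabs_def2 in Hpr. lra.
Qed.

Lemma G_le1 : forall {g G : R -> R}, hyps g G -> forall x, G x <= 1.
Proof.
  intros g G H x. apply Rnot_lt_le. intro Hlt.
  set (eps := (G x - 1) / 2).
  destruct (himp H eps ltac:(unfold eps; lra)) as [M HM].
  destruct (hG H x eps ltac:(unfold eps; lra)) as [M1 HM1].
  set (a := Rmin (Rmin (- M) (- M1)) x).
  assert (Ha1 : a <= - M) by (unfold a, Rmin; repeat destruct Rle_dec; lra).
  assert (Ha2 : a <= - M1) by (unfold a, Rmin; repeat destruct Rle_dec; lra).
  assert (Hax : a <= x) by (unfold a, Rmin; repeat destruct Rle_dec; lra).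
  set (b := Rmax M x).
  destruct (HM a b Ha1 (Rmax_l _ _)) as [pr Hpr].
  destruct (HM1 a Ha2) as [pr1 Hpr1].
  assert (RiemannInt pr1 <= RiemannInt pr).
  { apply int_mono_dom; try lra. unfold b; apply Rmax_r. intros; apply (hpos H). }
  apply Rabs_def2 in Hpr. apply Rabs_def2 in Hpr1. unfold eps in *. lra.
Qed.

Lemma G_lim : forall {g G : R -> R}, hyps g G -> forall eps, 0 < eps -> exists M, 0 <= M /\
  (forall x, x <= - M -> G x < eps) /\ (forall x, M <= x -> 1 - eps < G x).
Proof.
  intros g G H eps Heps.
  destruct (himp H eps Heps) as [M HM]. exists (Rabs M). split; [apply Rabs_pos|]. split.
  - intros x Hx. pose proof (Rle_abs M). pose proof (Rle_abs (-M)). rewrite Rabs_Ropp in *.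
    destruct (HM x (Rabs M) ltac:(lra) ltac:(lra)) as [pr Hpr].
    rewrite (G_diff H) in Hpr. pose proof (G_le1 H (Rabs M)). apply Rabs_def2 in Hpr. lra.
  - intros x Hx. pose proof (Rle_abs M). pose proof (Rle_abs (-M)). rewrite Rabs_Ropp in *.
    destruct (HM (- Rabs M) x ltac:(lra) ltac:(lra)) as [pr Hpr].
    rewrite (G_diff H) in Hpr. pose proof (G_nonneg H (- Rabs M)). apply Rabs_def2 in Hpr. lra.
Qed.

Lemma G_symm : forall {g G : R -> R}, hyps g G -> forall x, G (- x) = 1 - G x.
Proof.
  intros g G H x.
  assert (Hb : forall b, G (- x) - G (- b) = G b - G x).
  { intro b. pose proof (refl_RI g 0 x b (g_int H x b)) as pr1.
    rewrite <- (G_diff H _ _ (g_int H x b)). rewrite <- (refl_RI_val _ _ _ _ (g_int H x b) pr1).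
    rewrite <- (G_diff H _ _ (g_int H (- b) (- x))). apply RI_cast_val; intros; try ring.
    rewrite (hsym H). f_equal. ring. }
  apply eq_by_eps. intros eps Heps.
  destruct (G_lim H (eps/2) ltac:(lra)) as [M [HM0 [HM1 HM2]]].
  specialize (Hb M). pose proof (HM1 (- M) ltac:(lra)). pose proof (HM2 M ltac:(lra)).
  pose proof (G_nonneg H (- M)). pose proof (G_le1 H M).
  apply Rabs_def1; lra.
Qed.

Lemma G_zero_half : forall {g G : R -> R}, hyps g G -> G 0 = 1/2.
Proof. intros g G H. pose proof (G_symm H 0). rewrite Ropp_0 in H0. lra. Qed.


Lemma Q_spec : forall {g G : R -> R}, hyps g G -> forall t, 0 < t < 1 ->
  is_glb (fun x => t <= G x) (quantile G t).
Proof.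
  intros g G H t Ht. unfold quantile. apply epsilon_spec.
  destruct (G_lim H (Rmin t (1 - t)) ltac:(unfold Rmin; destruct Rle_dec; lra)) as [M [HM0 [HM1 HM2]]].
  assert (Hlow : forall x, t <= G x -> - M < x).
  { intros x Hx. apply Rnot_le_lt. intro Hle. specialize (HM1 x Hle).
    unfold Rmin in HM1; destruct Rle_dec; lra. }
  destruct (completeness (fun x => t <= G (- x))) as [m Hm].
  { exists M. intros x Hx. specialize (Hlow (- x) Hx). lra. }
  { exists (- M). rewrite Ropp_involutive. specialize (HM2 M (Rle_refl _)).
    unfold Rmin in HM2; destruct Rle_dec; lra. }
  exists (- m). split.
  - intros x Hx. assert (- x <= m) by (apply Hm; rewrite Ropp_involutive; auto). lra.
  - intros b Hb. assert (m <= - b); [|lra]. apply Hm. intros x Hx. specialize (Hb (- x) Hx). lra.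
Qed.

Lemma Q_G : forall {g G : R -> R}, hyps g G -> forall t, 0 < t < 1 -> G (quantile G t) = t.
Proof.
  intros g G H t Ht. destruct (Q_spec H _ Ht) as [Hlb Hglb]. set (q := quantile G t) in *.
  assert (Hge : forall x, q < x -> t <= G x).
  { intros x Hx. apply NNPP. intro Hn.
    assert (x <= q); [|lra]. apply Hglb. intros y Hy. apply Rnot_lt_le. intro Hlt.
    apply Hn. apply Rle_trans with (G y); auto. apply (G_mono H). lra. }
  assert (Hlt : forall x, x < q -> G x < t).
  { intros x Hx. apply Rnot_le_lt. intro Hle. specialize (Hlb x Hle). lra. }
  pose proof (g_le0 H 0). pose proof (hpos H 0).
  apply Rle_antisym.
  - apply Rnot_lt_le. intro Hc.
    set (d := (G q - t) / (g 0 + 1)).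
    assert (Hd : 0 < d) by (unfold d; apply Rdiv_lt_0_compat; lra).
    pose proof (Hlt (q - d) ltac:(lra)). pose proof (G_lip H (q - d) q ltac:(lra)).
    assert (g 0 * (q - (q - d)) < G q - t); [|lra].
    replace (q - (q - d)) with d by ring. unfold d.
    apply Rmult_lt_reg_r with (g 0 + 1); [lra|]. field_simplify; [|lra]. nra.
  - apply Rnot_lt_le. intro Hc.
    set (d := (t - G q) / (g 0 + 1)).
    assert (Hd : 0 < d) by (unfold d; apply Rdiv_lt_0_compat; lra).
    pose proof (Hge (q + d) ltac:(lra)). pose proof (G_lip H q (q + d) ltac:(lra)).
    assert (g 0 * (q + d - q) < t - G q); [|lra].
    replace (q + d - q) with d by ring. unfold d.
    apply Rmult_lt_reg_r with (g 0 + 1); [lra|]. field_simplify; [|lra]. nra.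
Qed.

Lemma Q_le_iff : forall {g G : R -> R}, hyps g G -> forall t y, 0 < t < 1 ->
  (quantile G t <= y <-> t <= G y).
Proof.
  intros g G H t y Ht. split.
  - intro Hq. rewrite <- (Q_G H _ Ht) at 1. apply (G_mono H). auto.
  - intro Hy. apply (proj1 (Q_spec H _ Ht)). auto.
Qed.

Lemma Q_mono : forall {g G : R -> R}, hyps g G -> forall t1 t2, 0 < t1 < 1 -> 0 < t2 < 1 ->
  t1 <= t2 -> quantile G t1 <= quantile G t2.
Proof.
  intros g G H t1 t2 H1 H2 Ht. apply (Q_le_iff H _ _ H1). rewrite (Q_G H _ H2). auto.
Qed.


Lemma two_point : forall {g G : R -> R}, hyps g G -> forall s t c, s <= t -> 0 <= c ->
  g t * g (s - c) <= g (t - c) * g s.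
Proof.
  intros g G H s t c Hst Hc.
  pose proof (hpos H t) as P1. pose proof (hpos H (s - c)) as P2.
  pose proof (hpos H (t - c)) as P3. pose proof (hpos H s) as P4.
  destruct (Req_dec (g t) 0) as [E1|E1]; [rewrite E1; nra|].
  destruct (Req_dec (g (s - c)) 0) as [E2|E2]; [rewrite E2; nra|].
  destruct (Req_dec c 0) as [->|Hc0]; [replace (s - 0) with s by ring; replace (t - 0) with t by ring; nra|].
  destruct (Req_dec s t) as [->|Hst0]; [nra|].
  set (u := s - c). set (l := (t - s) / (t - s + c)).
  assert (Hl : 0 <= l <= 1).
  { unfold l. assert (0 < t - s + c) by lra. split.
    - apply Rmult_le_pos; [lra|]. left; apply Rinv_0_lt_compat; lra.
    - apply Rmult_le_reg_r with (t - s + c); [lra|]. field_simplify; lra. }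
  assert (Hu : 0 < g u) by (unfold u; lra). assert (Ht : 0 < g t) by lra.
  destruct (hlc H u t l Hu Ht Hl) as [Ps Ls].
  destruct (hlc H u t (1 - l) Hu Ht ltac:(lra)) as [Ptc Ltc].
  replace (l * u + (1 - l) * t) with s in Ps, Ls by (unfold l, u; field; lra).
  replace ((1 - l) * u + (1 - (1 - l)) * t) with (t - c) in Ptc, Ltc by (unfold l, u; field; lra).
  apply Rnot_lt_le. intro Hlt.
  apply ln_increasing in Hlt; [|nra].
  rewrite !ln_mult in Hlt by lra. fold u in Hlt. lra.
Qed.

Lemma scal_val : forall f a b k (pr : Riemann_integrable f a b)
  (pr' : Riemann_integrable (fun x => k * f x) a b), RiemannInt pr' = k * RiemannInt pr.
Proof.
  intros f a b k pr pr'.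
  pose proof (@RiemannInt_P10 (fct_cte 0) f a b k (RiemannInt_P14 a b 0) pr) as p3.
  transitivity (RiemannInt p3).
  - symmetry. apply RI_cast_val; intros; unfold fct_cte; try ring.
  - rewrite (RiemannInt_P13 (RiemannInt_P14 a b 0) pr p3).
    rewrite RiemannInt_P15. ring.
Qed.

Definition gshift_RI {g G : R -> R} (H : hyps g G) (c a b : R) :
  Riemann_integrable (fun t => g (t - c)) a b :=
  shift_RI g a b c (g_int H (a - c) (b - c)).

Lemma gshift_val : forall {g G : R -> R}, hyps g G -> forall c a b
  (pr : Riemann_integrable (fun t => g (t - c)) a b), RiemannInt pr = G (b - c) - G (a - c).
Proof.
  intros g G H c a b pr. rewrite (shift_val g a b c (g_int H (a - c) (b - c)) pr).
  apply (G_diff H).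
Qed.

Lemma Pt : forall {g G : R -> R}, hyps g G -> forall x t c, x <= t -> 0 <= c ->
  g t * G (x - c) <= g (t - c) * G x.
Proof.
  intros g G H x t c Hxt Hc.
  pose proof (g_le0 H 0) as Hg0. pose proof (hpos H 0) as Hg00.
  apply Rnot_lt_le. intro Hlt.
  set (eps := g t * G (x - c) - g (t - c) * G x).
  assert (Heps : 0 < eps) by (unfold eps; lra).
  destruct (G_lim H (eps / (g 0 + 1)) ltac:(apply Rdiv_lt_0_compat; lra)) as [M [HM0 [HM1 _]]].
  set (A := Rmin x (- M)).
  assert (HA : A <= x) by apply Rmin_l.
  assert (HAc : A - c <= - M) by (unfold A; pose proof (Rmin_r x (- M)); lra).
  pose proof (HM1 _ HAc) as Hsmall.
  pose proof (gshift_RI H c A x) as p1. pose proof (g_int H A x) as p2.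
  pose proof (Riemann_integrable_scal (g t) p1) as q1.
  pose proof (Riemann_integrable_scal (g (t - c)) p2) as q2.
  assert (Hint : g t * RiemannInt p1 <= g (t - c) * RiemannInt p2).
  { rewrite <- (scal_val _ _ _ _ p1 q1), <- (scal_val _ _ _ _ p2 q2).
    apply RiemannInt_P19; auto. intros s Hs. apply (two_point H); lra. }
  rewrite (gshift_val H) in Hint. rewrite (G_diff H) in Hint.
  pose proof (G_nonneg H A). pose proof (G_nonneg H (A - c)). pose proof (hpos H t).
  pose proof (hpos H (t - c)). pose proof (g_le0 H t).
  assert (g t * G (A - c) < eps).
  { apply Rle_lt_trans with (g 0 * (eps / (g 0 + 1))).
    - apply Rmult_le_compat; lra.
    - apply Rmult_lt_reg_r with (g 0 + 1); [lra|]. field_simplify; [|lra]. nra. }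
  unfold eps in *. nra.
Qed.

Lemma L1 : forall {g G : R -> R}, hyps g G -> forall x y c, x <= y -> 0 <= c ->
  G (x - c) * G y <= G (y - c) * G x.
Proof.
  intros g G H x y c Hxy Hc.
  pose proof (g_int H x y) as p1. pose proof (gshift_RI H c x y) as p2.
  pose proof (Riemann_integrable_scal (G (x - c)) p1) as q1.
  pose proof (Riemann_integrable_scal (G x) p2) as q2.
  assert (Hint : G (x - c) * RiemannInt p1 <= G x * RiemannInt p2).
  { rewrite <- (scal_val _ _ _ _ p1 q1), <- (scal_val _ _ _ _ p2 q2).
    apply RiemannInt_P19; auto. intros t Ht. rewrite Rmult_comm, (Rmult_comm (G x)).
    apply (Pt H); lra. }
  rewrite (gshift_val H) in Hint. rewrite (G_diff H) in Hint. nra.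
Qed.

Lemma U1 : forall {g G : R -> R}, hyps g G -> forall p x h, 0 <= p -> p <= x -> 0 <= h ->
  G (x + h) - G x <= G (p + h) - G p.
Proof.
  intros g G H p x h Hp Hpx Hh.
  pose proof (gshift_RI H (p - x) p (p + h)) as p1. pose proof (g_int H p (p + h)) as p2.
  assert (Hint : RiemannInt p1 <= RiemannInt p2).
  { apply RiemannInt_P19; [lra|]. intros t Ht. apply (hmono H); lra. }
  rewrite (gshift_val H) in Hint. rewrite (G_diff H) in Hint.
  replace (p + h - (p - x)) with (x + h) in Hint by ring.
  replace (p - (p - x)) with x in Hint by ring. exact Hint.
Qed.


Lemma g_zero_left : forall {g G : R -> R}, hyps g G -> forall x z, G x = 0 -> z < x -> g z = 0.
Proof.
  intros g G H x z Hx Hz. destruct (Rle_dec x 0) as [Hx0|Hx0].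
  - apply Rle_antisym; [|apply (hpos H)]. apply Rnot_lt_le. intro Hpos.
    pose proof (G_diff H _ _ (g_int H z x)) as E1.
    assert (g z * (x - z) <= RiemannInt (g_int H z x)).
    { rewrite <- (RiemannInt_P15 (RiemannInt_P14 z x (g z))).
      apply RiemannInt_P19; [lra|]. intros t Ht. unfold fct_cte.
      rewrite (hsym H z), (hsym H t). apply (hmono H); lra. }
    pose proof (G_nonneg H z). nra.
  - pose proof (G_mono H 0 x ltac:(lra)). rewrite (G_zero_half H) in *. lra.
Qed.


Lemma d_facts : forall {g G : R -> R}, hyps g G -> forall alpha, 0 < alpha < 1 ->
  G (dzero G alpha) = 1 / (1 + alpha) /\ G (dzero1 G alpha) = 1 - alpha / 2 /\
  0 < dzero G alpha /\ 0 < dzero1 G alpha /\ dzero1 G alpha <= 2 * dzero G alpha /\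
  G (- dzero G alpha) = alpha / (1 + alpha) /\ G (- dzero1 G alpha) = alpha / 2.
Proof.
  intros g G H alpha Ha.
  assert (T0 : 0 < 1 / (1 + alpha) < 1).
  { split; [apply Rdiv_lt_0_compat; lra|]. apply Rmult_lt_reg_r with (1 + alpha); [lra|].
    field_simplify; lra. }
  assert (T1 : 0 < 1 - alpha / 2 < 1) by lra.
  pose proof (Q_G H _ T0) as E0. pose proof (Q_G H _ T1) as E1.
  unfold dzero, dzero1. set (d0 := quantile G (1 / (1 + alpha))) in *.
  set (d1 := quantile G (1 - alpha / 2)) in *.
  pose proof (G_zero_half H) as Gh.
  assert (P0 : 0 < d0).
  { apply Rnot_le_lt. intro Hle. apply (Q_le_iff H _ _ T0) in Hle. rewrite Gh in Hle.
    assert (1/2 < 1 / (1 + alpha)); [|lra].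
    apply Rmult_lt_reg_r with (2 * (1 + alpha)); [lra|]. field_simplify; lra. }
  assert (P1 : 0 < d1).
  { apply Rnot_le_lt. intro Hle. apply (Q_le_iff H _ _ T1) in Hle. rewrite Gh in Hle. lra. }
  assert (S0 : G (- d0) = alpha / (1 + alpha)).
  { rewrite (G_symm H), E0. field. lra. }
  assert (S1 : G (- d1) = alpha / 2) by (rewrite (G_symm H), E1; field).
  repeat split; auto.
  apply (Q_le_iff H _ _ T1).
  pose proof (L1 H (- d0) 0 d0 ltac:(lra) ltac:(lra)) as HL.
  replace (- d0 - d0) with (- (2 * d0)) in HL by ring.
  replace (0 - d0) with (- d0) in HL by ring. rewrite Gh, S0 in HL.
  rewrite (G_symm H (2 * d0)) in HL.
  assert (alpha / (1 + alpha) * (alpha / (1 + alpha)) * 2 <= alpha / 2).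
  { apply Rmult_le_reg_r with (2 * (1 + alpha) * (1 + alpha)); [nra|].
    field_simplify; [|lra]. assert (0 <= alpha * ((alpha - 1) * (alpha - 1))) by (apply Rmult_le_pos; nra). nra. }
  nra.
Qed.

Definition Jset (G : R -> R) (alpha theta x : R) : Prop :=
  0 < G x /\ ((x <= dzero G alpha /\ alpha * G x <= G (x - theta)) \/
   (dzero G alpha < x /\ x - quantile G (1/2 + (1 - alpha)/2 * G x) <= theta)).

Lemma s_range : forall {g G : R -> R}, hyps g G -> forall alpha x, 0 < alpha < 1 ->
  0 < 1/2 + (1 - alpha)/2 * G x < 1.
Proof.
  intros g G H alpha x Ha. pose proof (G_nonneg H x). pose proof (G_le1 H x). nra.
Qed.

Lemma Qs_bounds : forall {g G : R -> R}, hyps g G -> forall alpha x, 0 < alpha < 1 ->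
  dzero G alpha <= x ->
  dzero G alpha <= quantile G (1/2 + (1 - alpha)/2 * G x) <= dzero1 G alpha.
Proof.
  intros g G H alpha x Ha Hx.
  destruct (d_facts H alpha Ha) as (E0 & E1 & _).
  pose proof (G_mono H _ _ Hx) as Hm. pose proof (G_le1 H x).
  assert (T0 : 0 < 1 / (1 + alpha) < 1).
  { split; [apply Rdiv_lt_0_compat; lra|]. apply Rmult_lt_reg_r with (1 + alpha); [lra|].
    field_simplify; lra. }
  pose proof (s_range H alpha x Ha) as Hs.
  unfold dzero, dzero1 in *. split.
  - apply (Q_mono H); auto. rewrite E0 in Hm.
    assert (1 / (1 + alpha) = 1/2 + (1 - alpha)/2 * (1 / (1 + alpha))) by (field; lra).
    assert (0 <= (1 - alpha)/2) by lra. nra.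
  - apply (Q_mono H); auto. lra. nra.
Qed.

Lemma cover_J1 : forall {g G : R -> R}, hyps g G -> forall alpha theta x, 0 < alpha < 1 ->
  0 <= theta <= 2 * dzero G alpha -> Jset G alpha theta x -> cover_ind G alpha theta x = 1.
Proof.
  intros g G H alpha theta x Ha Ht [HG HJ].
  unfold cover_ind, hpd_l.
  destruct (Rle_dec x (dzero G alpha)) as [Hx|Hx].
  - destruct HJ as [[_ HJ]|[HJ _]]; [|lra].
    destruct (Rle_dec 0 theta); [|lra].
    destruct (Req_EM_T (G x) 0); [reflexivity|].
    destruct (Rle_dec theta (x - quantile G (alpha * G x))) as [|Hn]; [reflexivity|].
    exfalso. apply Hn. pose proof (G_le1 H x).
    assert (Hr : 0 < alpha * G x < 1) by nra.
    apply (Q_le_iff H _ (x - theta) Hr) in HJ. lra.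
  - destruct HJ as [[HJ _]|[_ HJ]]; [lra|].
    destruct (Rle_dec (x - quantile G (1 / 2 + (1 - alpha) / 2 * G x)) theta); [|lra].
    destruct (Rle_dec theta (x + quantile G (1 / 2 + (1 - alpha) / 2 * G x))) as [|Hn]; [reflexivity|].
    exfalso. apply Hn. pose proof (Qs_bounds H alpha x Ha ltac:(lra)). lra.
Qed.

Lemma cover_J0 : forall {g G : R -> R}, hyps g G -> forall alpha theta x, 0 < alpha < 1 ->
  0 <= theta <= 2 * dzero G alpha -> 0 < G x -> ~ Jset G alpha theta x ->
  cover_ind G alpha theta x = 0.
Proof.
  intros g G H alpha theta x Ha Ht HG HJ.
  unfold cover_ind, hpd_l.
  destruct (Rle_dec x (dzero G alpha)) as [Hx|Hx].
  - destruct (Rle_dec 0 theta); [|reflexivity].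
    destruct (Req_EM_T (G x) 0); [lra|].
    destruct (Rle_dec theta (x - quantile G (alpha * G x))) as [Hy|]; [|reflexivity].
    exfalso. apply HJ. split; auto. left. split; auto. pose proof (G_le1 H x).
    assert (Hr : 0 < alpha * G x < 1) by nra.
    apply (Q_le_iff H _ (x - theta) Hr). lra.
  - destruct (Rle_dec (x - quantile G (1 / 2 + (1 - alpha) / 2 * G x)) theta); [|reflexivity].
    exfalso. apply HJ. split; auto. right. split; auto; lra.
Qed.

Lemma cover_01 : forall G alpha theta x, cover_ind G alpha theta x = 0 \/ cover_ind G alpha theta x = 1.
Proof.
  intros. unfold cover_ind. repeat destruct Rle_dec; try destruct Req_EM_T; auto.
Qed.

Lemma up_closed : forall {g G : R -> R}, hyps g G -> forall alpha theta x y, 0 <= theta ->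
  x <= y -> 0 < G x -> alpha * G x <= G (x - theta) -> alpha * G y <= G (y - theta).
Proof.
  intros g G H alpha theta x y Ht Hxy HG Hx.
  pose proof (L1 H x y theta Hxy Ht). pose proof (G_nonneg H y).
  apply Rmult_le_reg_r with (G x); auto. nra.
Qed.

Lemma down_closed : forall {g G : R -> R}, hyps g G -> forall alpha theta x y, 0 < alpha < 1 ->
  dzero G alpha < x -> x <= y ->
  y - quantile G (1/2 + (1 - alpha)/2 * G y) <= theta ->
  x - quantile G (1/2 + (1 - alpha)/2 * G x) <= theta.
Proof.
  intros g G H alpha theta x y Ha Hx Hxy Hy.
  destruct (d_facts H alpha Ha) as (E0 & _ & P0 & _).
  pose proof (s_range H alpha x Ha) as Sx. pose proof (s_range H alpha y Ha) as Sy.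
  set (p := quantile G (1/2 + (1 - alpha)/2 * G x)) in *.
  assert (Gp : G p = 1/2 + (1 - alpha)/2 * G x) by (apply (Q_G H); auto).
  pose proof (G_mono H _ _ (Rlt_le _ _ Hx)) as Gx. rewrite E0 in Gx.
  pose proof (G_zero_half H) as Gh.
  assert (Hp0 : 0 <= p).
  { apply Rnot_lt_le. intro Hlt. pose proof (G_mono H _ _ (Rlt_le _ _ Hlt)).
    assert (0 < 1 / (1 + alpha)) by (apply Rdiv_lt_0_compat; lra). nra. }
  assert (Hpx : p <= x).
  { apply (Q_le_iff H); auto.
    assert (1 / (1 + alpha) = 1/2 + (1 - alpha)/2 * (1 / (1 + alpha))) by (field; lra).
    nra. }
  pose proof (U1 H p x (y - x) Hp0 Hpx ltac:(lra)) as HU.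
  replace (x + (y - x)) with y in HU by ring.
  assert (quantile G (1/2 + (1 - alpha)/2 * G y) <= p + (y - x)); [|lra].
  apply (Q_le_iff H); auto. pose proof (G_mono H _ _ Hxy). nra.
Qed.

Lemma J_convex : forall {g G : R -> R}, hyps g G -> forall alpha theta, 0 < alpha < 1 ->
  0 <= theta -> forall x y z, Jset G alpha theta x -> Jset G alpha theta z -> x <= y <= z ->
  Jset G alpha theta y.
Proof.
  intros g G H alpha theta Ha Ht x y z [Gx Jx] [Gz Jz] Hy.
  assert (Gy : 0 < G y) by (pose proof (G_mono H x y ltac:(lra)); lra).
  split; auto.
  destruct (Rle_dec y (dzero G alpha)).
  - left. split; auto. destruct Jx as [[_ Jx]|[Hx _]]; [|lra].
    apply (up_closed H alpha theta x y Ht ltac:(lra) Gx Jx).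
  - right. split; [lra|]. destruct Jz as [[Hz _]|[Hz Jz]]; [lra|].
    apply (down_closed H alpha theta y z Ha ltac:(lra) ltac:(lra) Jz).
Qed.

Lemma cov_bounds : forall {g G : R -> R}, hyps g G -> forall alpha theta x,
  0 <= cov_integrand g G alpha theta x <= g (x - theta).
Proof.
  intros g G H alpha theta x. unfold cov_integrand. pose proof (hpos H (x - theta)).
  destruct (cover_01 G alpha theta x) as [E|E]; rewrite E; lra.
Qed.

Lemma cov_RI : forall {g G : R -> R}, hyps g G -> forall alpha theta, 0 < alpha < 1 ->
  0 <= theta <= 2 * dzero G alpha -> forall a b,
  Riemann_integrable (cov_integrand g G alpha theta) a b.
Proof.
  intros g G H alpha theta Ha Ht a b.
  set (k' := fun x => if Req_EM_T (G x) 0 then 0 else cov_integrand g G alpha theta x).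
  assert (pr' : Riemann_integrable k' a b).
  { apply (conv_RI (fun x => g (x - theta)) k' (Jset G alpha theta) a b).
    - apply (gshift_RI H).
    - intros x y z Hx Hz Hy. apply (J_convex H alpha theta Ha (proj1 Ht) x y z Hx Hz Hy).
    - intros x Hx. unfold k'. destruct (Req_EM_T (G x) 0) as [E|E].
      + destruct Hx; lra.
      + unfold cov_integrand. rewrite (cover_J1 H alpha theta x Ha Ht Hx). ring.
    - intros x Hx. unfold k'. destruct (Req_EM_T (G x) 0) as [E|E]; auto.
      unfold cov_integrand. rewrite (cover_J0 H alpha theta x Ha Ht); [ring| |auto].
      pose proof (G_nonneg H x). lra. }
  assert (Hbad : forall x p, G x = 0 -> G p = 0 -> cov_integrand g G alpha theta x <> 0 ->
    cov_integrand g G alpha theta p <> 0 -> x <= p).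
  { intros x p Gx Gp Cx Cp. apply Rnot_lt_le. intro Hlt. apply Cp.
    unfold cov_integrand. rewrite (g_zero_left H x (p - theta) Gx ltac:(lra)). ring. }
  destruct (excluded_middle_informative (exists p, G p = 0 /\ cov_integrand g G alpha theta p <> 0))
    as [Hex|Hne].
  - destruct (constructive_indefinite_description _ Hex) as [p [Gp Cp]].
    apply (pt_mod k' _ a b p pr'). intros x _ Hxp. unfold k'.
    destruct (Req_EM_T (G x) 0) as [E|E]; auto.
    apply NNPP. intro Cx.
    pose proof (Hbad x p E Gp Cx Cp).
    pose proof (Hbad p x Gp E Cp Cx). lra.
  - apply (Riemann_integrable_ext (f := k')); auto. intros x _. unfold k'.
    destruct (Req_EM_T (G x) 0) as [E|E]; auto.
    apply NNPP. intro Cx. apply Hne. exists x. split; auto.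
Qed.

Lemma G_eps_gt : forall {g G : R -> R}, hyps g G -> forall alpha eps, 0 < alpha < 1 ->
  0 < eps <= dzero G alpha -> 1/2 < G eps.
Proof.
  intros g G H alpha eps Ha He.
  destruct (d_facts H alpha Ha) as (E0 & _ & P0 & _).
  pose proof (G_zero_half H) as Gh.
  apply Rnot_le_lt. intro Hle.
  set (m := eps / 2).
  assert (Hm1 : g m * (m - 0) <= RiemannInt (g_int H 0 m)).
  { rewrite <- (RiemannInt_P15 (RiemannInt_P14 0 m (g m))).
    apply RiemannInt_P19; [unfold m; lra|]. intros t Ht. unfold fct_cte. apply (hmono H); lra. }
  rewrite (G_diff H) in Hm1.
  pose proof (G_mono H m eps ltac:(unfold m; lra)).
  assert (gm : g m = 0).
  { apply Rle_antisym; [|apply (hpos H)]. unfold m in *. nra. }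
  assert (Hm2 : RiemannInt (g_int H m (dzero G alpha)) <= 0 * (dzero G alpha - m)).
  { apply int_le_const; [unfold m; lra|]. intros t Ht. rewrite <- gm. apply (hmono H); unfold m in *; lra. }
  rewrite (G_diff H) in Hm2.
  assert (1/2 < 1 / (1 + alpha)).
  { apply Rmult_lt_reg_r with (2 * (1 + alpha)); [lra|]. field_simplify; lra. }
  lra.
Qed.

Lemma strict_left : forall {g G : R -> R}, hyps g G -> forall alpha x, 0 < alpha < 1 ->
  x < dzero G alpha -> 0 < G x -> G (x - 2 * dzero G alpha) < alpha * G x.
Proof.
  intros g G H alpha x Ha Hx Gx.
  destruct (d_facts H alpha Ha) as (E0 & _ & P0 & _ & _ & S0 & _).
  set (d0 := dzero G alpha) in *.
  apply Rnot_le_lt. intro Hc.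
  set (x' := Rmax x 0).
  assert (Hx' : x <= x' /\ 0 <= x' /\ x' < d0) by (unfold x', Rmax; destruct Rle_dec; lra).
  assert (Gx' : 0 < G x') by (pose proof (G_mono H x x' ltac:(lra)); lra).
  pose proof (up_closed H alpha (2 * d0) x x' ltac:(lra) ltac:(lra) Gx Hc) as Hc'.
  set (e := d0 - x').
  assert (He : 0 < e <= d0) by (unfold e; lra).
  pose proof (G_eps_gt H alpha e Ha He) as Ge.
  pose proof (G_zero_half H) as Gh.
  pose proof (L1 H (- d0) 0 e ltac:(lra) ltac:(lra)) as L1i.
  pose proof (L1 H 0 e e ltac:(lra) ltac:(lra)) as L1ii.
  pose proof (L1 H e d0 e ltac:(lra) ltac:(lra)) as L1iii.
  replace (x' - 2 * d0) with (- d0 - e) in Hc' by (unfold e; ring).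
  replace (d0 - e) with x' in L1iii by (unfold e; ring).
  replace (e - e) with 0 in L1ii, L1iii by ring.
  replace (0 - e) with (- e) in L1i, L1ii by ring.
  rewrite (G_symm H e) in L1i, L1ii. rewrite Gh in L1i, L1ii, L1iii.
  set (a := G (- d0 - e)) in *. set (b := G (- d0)) in *. set (E := G e) in *.
  set (D := G d0) in *. set (D' := G x') in *.
  assert (Hb : b = alpha * D) by (rewrite S0, E0; field; lra).
  assert (HD : 0 < D) by (rewrite E0; apply Rdiv_lt_0_compat; lra).
  assert (Hiv : b * D' <= a * D) by (rewrite Hb; nra).
  assert (Hbpos : 0 < b) by (rewrite Hb; nra).
  assert (Ha0 : 0 < a) by nra.
  assert (HE1 : E <= 1) by apply (G_le1 H).
  assert (Hc0 : 0 <= 1 - E) by lra.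
  assert (Hch : a * (1/2) * ((1/2) * D) <= (1 - E) * b * (D' * E)).
  { apply Rmult_le_compat; try nra. }
  assert (Hch2 : (1 - E) * b * (D' * E) <= (1 - E) * E * (a * D)).
  { replace ((1 - E) * b * (D' * E)) with ((1 - E) * E * (b * D')) by ring.
    apply Rmult_le_compat_l; [nra|exact Hiv]. }
  assert (HaD : 0 < a * D) by nra.
  assert ((1/2) * (1/2) <= (1 - E) * E).
  { apply Rmult_le_reg_r with (a * D); auto. nra. }
  nra.
Qed.

Lemma cov_exists : forall {g G : R -> R}, hyps g G -> forall alpha theta, 0 < alpha < 1 ->
  0 <= theta <= 2 * dzero G alpha -> exists V, improper_int (cov_integrand g G alpha theta) V.
Proof.
  intros g G H alpha theta Ha Ht.
  apply (improper_exists _ 1 (cov_RI H alpha theta Ha Ht)).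
  - intros x. apply (cov_bounds H).
  - intros a b pr Hab.
    apply Rle_trans with (RiemannInt (gshift_RI H theta a b)).
    + apply RiemannInt_P19; auto. intros; apply (cov_bounds H).
    + rewrite (gshift_val H). pose proof (G_le1 H (b - theta)). pose proof (G_nonneg H (a - theta)). lra.
Qed.

Lemma K_eq : forall {g G : R -> R}, hyps g G -> forall alpha, 0 < alpha < 1 ->
  G (dzero G alpha) - G (- dzero1 G alpha) = G (dzero1 G alpha) - G (- dzero G alpha).
Proof.
  intros g G H alpha Ha. rewrite (G_symm H (dzero1 G alpha)), (G_symm H (dzero G alpha)). ring.
Qed.

Lemma lower_bound : forall {g G : R -> R}, hyps g G -> forall alpha theta V, 0 < alpha < 1 ->
  0 <= theta <= dzero1 G alpha -> improper_int (cov_integrand g G alpha theta) V ->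
  G (dzero G alpha) - G (- dzero1 G alpha) <= V.
Proof.
  intros g G H alpha theta V Ha Ht HV.
  destruct (d_facts H alpha Ha) as (E0 & E1 & P0 & P1 & D12 & S0 & S1).
  set (d0 := dzero G alpha) in *. set (d1 := dzero1 G alpha) in *.
  assert (Ht2 : 0 <= theta <= 2 * d0) by lra.
  assert (Hcov : forall x, theta - d1 <= x <= theta + d0 ->
    cov_integrand g G alpha theta x = g (x - theta)).
  { intros x Hx. unfold cov_integrand. rewrite (cover_J1 H alpha theta x Ha Ht2); [ring|].
    assert (G0 : 0 < G (theta - d1)).
    { pose proof (G_mono H (- d1) (theta - d1) ltac:(lra)). lra. }
    assert (Gx : 0 < G x) by (pose proof (G_mono H _ _ (proj1 Hx)); lra).
    split; auto. destruct (Rle_dec x d0).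
    - left. split; auto. apply (up_closed H alpha theta (theta - d1) x (proj1 Ht) (proj1 Hx) G0).
      replace (theta - d1 - theta) with (- d1) by ring. rewrite S1.
      pose proof (G_mono H (theta - d1) 0 ltac:(lra)). rewrite (G_zero_half H) in *. nra.
    - right. assert (Hxd : d0 < x) by (apply Rnot_le_lt; auto). split; [exact Hxd|].
      pose proof (Qs_bounds H alpha x Ha (Rlt_le _ _ Hxd)). unfold d0, d1 in *. lra. }
  assert (Hint : forall pr : Riemann_integrable (cov_integrand g G alpha theta) (theta - d1) (theta + d0),
     RiemannInt pr = G d0 - G (- d1)).
  { intros pr. rewrite (RiemannInt_P18 pr (gshift_RI H theta _ _)); [|lra|].
    - rewrite (gshift_val H). f_equal; f_equal; ring.
    - intros x Hx. apply Hcov. lra. }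
  apply Rnot_lt_le. intro Hlt.
  destruct (HV (G d0 - G (- d1) - V) ltac:(lra)) as [M HM].
  set (a := Rmin (- M) (theta - d1)). set (b := Rmax M (theta + d0)).
  destruct (HM a b (Rmin_l _ _) (Rmax_l _ _)) as [pr Hpr].
  assert (RiemannInt (cov_RI H alpha theta Ha Ht2 (theta - d1) (theta + d0)) <= RiemannInt pr).
  { apply int_mono_dom; [apply Rmin_r|lra|apply Rmax_r|]. intros; apply (cov_bounds H). }
  rewrite Hint in H0. apply Rabs_def2 in Hpr. lra.
Qed.

Lemma upper_bound : forall {g G : R -> R}, hyps g G -> forall alpha V, 0 < alpha < 1 ->
  improper_int (cov_integrand g G alpha (2 * dzero G alpha)) V ->
  V <= G (dzero1 G alpha) - G (- dzero G alpha).
Proof.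
  intros g G H alpha V Ha HV.
  destruct (d_facts H alpha Ha) as (E0 & E1 & P0 & P1 & D12 & S0 & S1).
  set (d0 := dzero G alpha) in *. set (d1 := dzero1 G alpha) in *.
  assert (Ht2 : 0 <= 2 * d0 <= 2 * d0) by lra.
  set (c := 2 * d0 + d1).
  assert (Z1 : forall x, x < d0 -> cov_integrand g G alpha (2 * d0) x = 0).
  { intros x Hx. unfold cov_integrand. pose proof (G_nonneg H x).
    destruct (Req_dec (G x) 0) as [E|E].
    - rewrite (g_zero_left H x (x - 2 * d0) E ltac:(lra)). ring.
    - rewrite (cover_J0 H alpha (2 * d0) x Ha Ht2); [ring|lra|].
      intros [_ [[_ J]|[J _]]]; [|unfold d0 in *; lra].
      pose proof (strict_left H alpha x Ha Hx ltac:(lra)). unfold d0 in *. lra. }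
  assert (Z2 : forall x, c < x -> cov_integrand g G alpha (2 * d0) x = 0).
  { intros x Hx. unfold cov_integrand.
    assert (Gx : 0 < G x).
    { pose proof (G_mono H d0 x ltac:(unfold c in *; lra)). rewrite E0 in *.
      assert (0 < 1 / (1 + alpha)) by (apply Rdiv_lt_0_compat; lra). lra. }
    rewrite (cover_J0 H alpha (2 * d0) x Ha Ht2 Gx); [ring|].
    intros [_ [[J _]|[_ J]]]; [unfold c, d0 in *; lra|].
    assert (Hxd : d0 <= x) by (unfold c in *; lra).
    pose proof (Qs_bounds H alpha x Ha Hxd).
    unfold c, d0, d1 in *; lra. }
  apply Rnot_lt_le. intro Hlt.
  destruct (HV (V - (G d1 - G (- d0))) ltac:(lra)) as [M HM].
  set (a := Rmin (- M) d0). set (b := Rmax M c).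
  destruct (HM a b (Rmin_l _ _) (Rmax_l _ _)) as [pr Hpr].
  assert (Ha0 : a <= d0) by apply Rmin_r. assert (Hcb : c <= b) by apply Rmax_r.
  assert (Hdc : d0 <= c) by (unfold c; lra).
  pose proof (cov_RI H alpha (2 * d0) Ha Ht2) as RI.
  rewrite <- (RiemannInt_P26 (RI a d0) (RI d0 b) pr) in Hpr.
  rewrite <- (RiemannInt_P26 (RI d0 c) (RI c b) (RI d0 b)) in Hpr.
  assert (I1 : RiemannInt (RI a d0) <= 0 * (d0 - a)).
  { apply int_le_const; auto. intros x Hx. rewrite Z1; lra. }
  assert (I3 : RiemannInt (RI c b) <= 0 * (b - c)).
  { apply int_le_const; auto. intros x Hx. rewrite Z2; lra. }
  assert (I2 : RiemannInt (RI d0 c) <= RiemannInt (gshift_RI H (2 * d0) d0 c)).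
  { apply RiemannInt_P19; auto. intros; apply (cov_bounds H). }
  rewrite (gshift_val H) in I2.
  replace (c - 2 * d0) with d1 in I2 by (unfold c; ring).
  replace (d0 - 2 * d0) with (- d0) in I2 by ring.
  apply Rabs_def2 in Hpr. lra.
Qed.

Theorem lemma6 (g G : R -> R) (alpha theta : R)
  (Halpha : 0 < alpha < 1)
  (Hdens : is_density g) (Hsym : symmetric_unimodal g) (Hlc : logconcave g)
  (HG : forall x, lower_int g x (G x))
  (Htheta : 0 <= theta <= dzero1 G alpha) :
  exists C_theta C_2d0,
    improper_int (cov_integrand g G alpha theta) C_theta /\
    improper_int (cov_integrand g G alpha (2 * dzero G alpha)) C_2d0 /\
    C_2d0 <= C_theta.
Proof.
  assert (H : hyps g G).
  { destruct Hdens, Hsym. constructor; auto. }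
  destruct (d_facts H alpha Halpha) as (_ & _ & P0 & _ & D12 & _).
  destruct (cov_exists H alpha theta Halpha ltac:(lra)) as [V1 HV1].
  destruct (cov_exists H alpha (2 * dzero G alpha) Halpha ltac:(lra)) as [V2 HV2].
  exists V1, V2. split; [|split]; auto.
  pose proof (lower_bound H alpha theta V1 Halpha Htheta HV1).
  pose proof (upper_bound H alpha V2 Halpha HV2).
  pose proof (K_eq H alpha Halpha). lra.
Qed.
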